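(* For every integer $n\ge 8$, Sepy has a winning strategy in the Dom-start Disjoint Domination Game played on the cycle $C_n$.
   Context: For a vertex $v$ of a graph $G$, $N[v]$ denotes its closed neighborhood. The Disjoint Domination Game on an isolate-free graph $G$ is played by Dom and Sepy with colors $p$ and $b$; $V_p,V_b$ denote the current sets of vertices of each color. Players alternate; either player may use either color. A move chooses a vertex $v$ and a color $c$ such that (i) $v$ is uncolored and (ii) some $u\in N[v]$ satisfies $N[u]\cap V_c=\emptyset$ (before the move); then $v$ gets color $c$. A player must make a legal move on his turn (no passing). The game ends as soon as either (s* ) some vertex $v$ has $N[v]\subseteq V_p$ or $N[v]\subseteq V_b$ — Sepy wins; or (d* ) both $V_p$ and $V_b$ are dominating sets — Dom wins. In the Dom-start game Dom moves first. *)

(* Defs.v *)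
From mathcomp Require Import all_boot.
Set Implicit Arguments. Unset Strict Implicit. Unset Printing Implicit Defensive.

Section Game.
Variables (T : finType) (e : rel T).

Definition cnbhd (v : T) : {set T} := [set u | (u == v) || e v u].

(* a position: each vertex is uncolored (None), colored p (Some true)
   or colored b (Some false) *)
Definition position := T -> option bool.

Definition Vc (s : position) (c : bool) : {set T} := [set v | s v == Some c].

Definition dominating (D : {set T}) : Prop :=
  forall v : T, exists2 u, u \in cnbhd v & u \in D.

Definition legal (s : position) (v : T) (c : bool) : Prop :=
  s v = None /\ exists2 u, u \in cnbhd v & [disjoint cnbhd u & Vc s c].

Definition play (s : position) (v : T) (c : bool) : position :=
  fun x => if x == v then Some c else s x.

Definition sepy_end (s : position) : Prop :=
  exists v, cnbhd v \subset Vc s true \/ cnbhd v \subset Vc s false.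

Definition dom_end (s : position) : Prop :=
  dominating (Vc s true) /\ dominating (Vc s false).

(* SepyWins dom_to_move s : Sepy has a winning strategy from position s,
   where dom_to_move says whose turn it is. *)
Inductive SepyWins : bool -> position -> Prop :=
| SW_end : forall t s, sepy_end s -> SepyWins t s
| SW_dom : forall s, ~ sepy_end s -> ~ dom_end s ->
    (forall v c, legal s v c -> SepyWins false (play s v c)) ->
    SepyWins true s
| SW_sepy : forall s v c, ~ sepy_end s -> ~ dom_end s ->
    legal s v c -> SepyWins true (play s v c) -> SepyWins false s.

Definition empty_position : position := fun _ => None.

Definition sepy_wins_dom_start : Prop := SepyWins true empty_position.

End Game.

Definition cycle_rel (n : nat) : rel 'I_n :=
  fun i j => (val j == (val i).+1 %% n) || (val i == (val j).+1 %% n).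

(* Main.v *)
Require Import Defs.
From mathcomp Require Import all_boot zify.
From Stdlib Require Import Classical.
Set Implicit Arguments. Unset Strict Implicit. Unset Printing Implicit Defensive.

Section Cyc.
Variable n : nat.
Hypothesis n8 : 8 <= n.

Lemma n_pos : 0 < n. Proof. by apply: leq_trans n8. Qed.

Definition sh (i : 'I_n) (k : nat) : 'I_n := Ordinal (ltn_pmod (i + k) n_pos).

Lemma sh_add i a b : sh (sh i a) b = sh i (a + b).
Proof. apply: val_inj => /=. by rewrite modnDml addnA. Qed.

Lemma sh0 i : sh i 0 = i.
Proof. apply: val_inj => /=. by rewrite addn0 modn_small. Qed.

Lemma shDn i k : sh i (k + n) = sh i k.
Proof. apply: val_inj => /=. by rewrite addnA modnDr. Qed.

Lemma sh_n i : sh i n = i.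
Proof. by rewrite -[X in sh i X](add0n n) shDn sh0. Qed.

Lemma sh_eq v a b : a < n -> b < n -> (sh v a == sh v b) = (a == b).
Proof.
move=> ha hb; apply/eqP/eqP => [|->] //.
move/(congr1 val) => /= /eqP; rewrite eqn_modDl => /eqP.
by rewrite !modn_small.
Qed.

Lemma sh_eqv v a : a < n -> (sh v a == v) = (a == 0).
Proof. move=> ha; rewrite -{2}(sh0 v) sh_eq //; exact: n_pos. Qed.

Lemma v_eqsh v a : a < n -> (v == sh v a) = (a == 0).
Proof. by move=> ha; rewrite eq_sym sh_eqv. Qed.

Lemma cnbhdE x : cnbhd (@cycle_rel n) x = [set x; sh x 1; sh x (n-1)].
Proof.
apply/setP => u; rewrite !inE /cycle_rel.
rewrite -orbA; congr (_ || (_ || _)).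
  by apply/eqP/eqP => [H|->]; [apply: val_inj; rewrite /= addn1 | rewrite /= addn1].
apply/eqP/eqP => [H|->].
  have -> : x = sh u 1 by apply: val_inj; rewrite /= addn1.
  by rewrite sh_add (_ : 1 + (n-1) = n) ?sh_n //; lia.
have : sh (sh x (n-1)) 1 = x by rewrite sh_add (_ : n-1+1 = n) ?sh_n //; lia.
by move/(congr1 val) => /= E; rewrite -[in LHS]E /= addn1.
Qed.

Lemma cnbhdS v k : 0 < k -> cnbhd (@cycle_rel n) (sh v k) = [set sh v k; sh v k.+1; sh v k.-1].
Proof.
move=> hk; rewrite cnbhdE !sh_add addn1.
by rewrite (_ : k + (n-1) = k.-1 + n) ?shDn //; lia.
Qed.

Lemma cnbhd0 v : cnbhd (@cycle_rel n) v = [set v; sh v 1; sh v (n-1)].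
Proof. exact: cnbhdE. Qed.

Notation E := (@cycle_rel n).
Notation P := (position 'I_n).

Lemma nk_eq k j : 0 < k <= 3 -> j < 5 -> (n - k == j) = false.
Proof. move=> /andP [h1 h2] h3; apply/eqP; lia. Qed.
Lemma eqn_nk k j : 0 < k <= 3 -> j < 5 -> (j == n - k) = false.
Proof. move=> /andP [h1 h2] h3; apply/eqP; lia. Qed.
Lemma nkk k k' : k <= 3 -> k' <= 3 -> (n - k == n - k') = (k == k').
Proof. move=> h1 h2; apply/eqP/eqP; lia. Qed.

Lemma ltn8 k : k < 8 -> k < n.
Proof. move=> h; lia. Qed.
Lemma ltnk k : 0 < k -> n - k < n.
Proof. move=> h; lia. Qed.

Ltac dist := rewrite ?eqxx ?sh_add ?sh0 ?eqxx ?sh_eq ?sh_eqv ?v_eqsh ?eqxx ?nkk ?nk_eq ?eqn_nk ?orbT //=; rewrite ?eqxx ?orbT //;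
  try solve [apply: ltn8; done | apply: ltnk; done].

Lemma no_sepy2 (s : P) a :
  (forall x, s x != None -> (x == a) || (x == sh a 1)) -> ~ sepy_end E s.
Proof.
move=> H [x Hx].
have [c Hc] : exists c, cnbhd E x \subset Vc s c by case: Hx => Hx; eexists; exact Hx.
have col y : y \in cnbhd E x -> (y == a) || (y == sh a 1).
  move=> Hy; apply: H; move/subsetP: Hc => /(_ y Hy); rewrite /Vc inE => /eqP -> //.
have h0 := col x; have h1 := col (sh x 1); have h2 := col (sh x (n-1)).
rewrite cnbhdE !inE !eqxx ?orbT in h0 h1 h2.
case/orP: (h0 isT) => /eqP Ex; subst x.
  by move: (h2 isT); dist.
by move: (h1 isT); dist.
Qed.

Lemma not_dom (s : P) c w : (forall x, s x = Some c -> x = w) -> ~ dom_end E s.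
Proof.
move=> H [Ht Hf].
have Hd : dominating E (Vc s c) by case: c H => H.
case: (Hd (sh w 3)) => u; rewrite cnbhdS // !inE /Vc ?inE => Hu /eqP /H Euw; subst u.
by move: Hu; dist.
Qed.

Lemma myDisj (A B : {set 'I_n}) : (forall x, x \in A -> x \in B -> False) -> [disjoint A & B].
Proof.
move=> H; rewrite disjoint_subset; apply/subsetP => x Hx; rewrite inE; apply/negP => Hy.
exact: H Hx Hy.
Qed.

Lemma sepy_end_of (s : P) x c : cnbhd E x \subset Vc s c -> sepy_end E s.
Proof. by case: c => H; exists x; [left|right]. Qed.

Lemma someNeg c (Q : Prop) : Some c = Some (~~ c) -> Q.
Proof. by case: c. Qed.

Lemma main : SepyWins E true (@empty_position _).
Proof.
have o : 'I_n := Ordinal n_pos.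
apply: SW_dom.
- by apply: (@no_sepy2 _ o) => x; rewrite /empty_position.
- by apply: (@not_dom _ true o) => x; rewrite /empty_position.
move=> v c _.
apply: (@SW_sepy _ _ _ (sh v 1) c).
- by apply: (@no_sepy2 _ v) => x; rewrite ?/s3 /play /empty_position /=; case: ifP => [/eqP ->|]; rewrite ?eqxx.
- by apply: (@not_dom _ (~~ c) v) => x; rewrite ?/s3 /play /empty_position /=; case: ifP => [/eqP ->|].
- split; first by rewrite ?/s3 /play /=; dist.
  exists (sh v 2); first by rewrite cnbhdS // !inE; dist.
  apply: myDisj => x; rewrite cnbhdS // !inE -orbA => /or3P [] /eqP ->;
    rewrite /Vc ?inE /play /= /empty_position; dist.
apply: SW_dom.
- apply: (@no_sepy2 _ v) => x; rewrite ?/s3 /play /empty_position /=.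
  case: ifP => _; first by rewrite orbT.
  by case: ifP.
- apply: (@not_dom _ (~~ c) v) => x; rewrite ?/s3 /play /empty_position /=.
  case: ifP => [/eqP ->|_]; first by case: c.
  by case: ifP => [/eqP ->|_] //; case: c.
move=> w d [Hw _].
have [hw1 hw0] : (w == sh v 1) = false /\ (w == v) = false.
  by move: Hw; rewrite ?/s3 /play /=; case: ifP => // _; case: ifP.
have hw1' : (sh v 1 == w) = false by rewrite eq_sym.
have hw0' : (v == w) = false by rewrite eq_sym.
clear Hw.
set s3 := (X in SepyWins _ _ X).
case: (classic (sepy_end E s3)) => H3.
  exact: SW_end.
have nd3 : ~ dom_end E s3.
  apply: (@not_dom _ (~~ c) w) => x; rewrite /s3 /play /empty_position /=.
  by case: ifP => [/eqP ->|_] //; case: ifP => _; [|case: ifP => _ //]; apply: someNeg.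
case: (boolP [|| w == sh v 2, w == sh v 3 | w == sh v 4]) => Hw'.
  have hl1 : (sh v (n-1) == w) = false by case/or3P: Hw' => /eqP ->; dist.
  have hl2 : (sh v (n-2) == w) = false by case/or3P: Hw' => /eqP ->; dist.
  have hl3 : (sh v (n-3) == w) = false by case/or3P: Hw' => /eqP ->; dist.
  apply: (@SW_sepy _ _ _ (sh v (n-1)) c); [exact: H3 | exact: nd3 | |].
    split; first by rewrite /s3 /play /= hl1 /empty_position; dist.
    exists (sh v (n-2)).
      have e1 : (n-1).-1 = n-2 by lia.
      have e0 : 0 < n - 1 by lia.
      have e5 : (n-1).+1 = n by lia.
      by rewrite cnbhdS // e1 e5 sh_n !inE; dist.
    have e2 : (n-2).+1 = n-1 by lia.
    have e3 : (n-2).-1 = n-3 by lia.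
    have e4 : 0 < n - 2 by lia.
    apply: myDisj => x; rewrite cnbhdS // e2 e3.
    rewrite !inE -orbA => /or3P [] /eqP ->;
      rewrite /Vc ?inE /s3 /play /= ?hl1 ?hl2 ?hl3 /empty_position; dist.
  apply: SW_end; apply: (@sepy_end_of _ v c); apply/subsetP => x.
  rewrite cnbhd0 !inE -orbA => /or3P [] /eqP ->;
    rewrite /Vc ?inE /s3 /play /= ?hw1' ?hw0' ?hl1 /empty_position; dist.
have [h2 H34] := norP Hw'. have [h3 h4] := norP H34.
have h2' : (sh v 2 == w) = false by rewrite eq_sym; exact: negbTE.
have h3' : (sh v 3 == w) = false by rewrite eq_sym; exact: negbTE.
have h4' : (sh v 4 == w) = false by rewrite eq_sym; exact: negbTE.
apply: (@SW_sepy _ _ _ (sh v 2) c); [exact: H3 | exact: nd3 | |].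
  split; first by rewrite /s3 /play /= h2' /empty_position; dist.
  exists (sh v 3); first by rewrite cnbhdS ?inE; dist.
  apply: myDisj => x; rewrite cnbhdS // !inE -orbA => /or3P [] /eqP ->;
    rewrite /Vc ?inE /s3 /play /= ?h2' ?h3' ?h4' /empty_position; dist.
apply: SW_end; apply: (@sepy_end_of _ (sh v 1) c); apply/subsetP => x.
rewrite cnbhdS // !inE -orbA => /or3P [] /eqP ->;
  rewrite /Vc ?inE /s3 /play /= ?hw1' ?h2' ?sh0 ?hw0' /empty_position; dist.
Qed.

End Cyc.

Theorem proposition6 (n : nat) : 8 <= n -> sepy_wins_dom_start (@cycle_rel n).
Proof. move=> n8; exact: (main n8). Qed.
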